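(* Let $q$ be a prime power, $e\in\{0,1,2\}$, $r$ an integer ($r$ odd if $e\in\{0,2\}$, $r$ even if $e=1$), and let $\{\Sigma_1,\dots,\Sigma_{N+1}\}$, $N=q^{\frac{r+e+1}{2}}$, be a spread of a non-degenerate quadric $\mathcal Q_{r+2,e}$ of ${\rm PG}(r+2,q)$ with associated polarity $\perp$. Fix a point $P\in\Sigma_{N+1}$ and a hyperplane $\mathcal U\cong{\rm PG}(r+1,q)$ of ${\rm PG}(r+2,q)$ with $P\notin\mathcal U$. Put $H=\mathcal U\cap P^\perp$ (an $r$-space, a hyperplane of $\mathcal U$), and $S_i=\langle P,\Sigma_i\rangle\cap\mathcal U$ for $i=1,\dots,N$. Then $\mathcal P=\{S_1,\dots,S_N\}$ is a hyperbolic, parabolic or elliptic avsp of $\mathcal U$ (with respect to the hyperplane $H$ and the quadric $\mathcal Q_{r,e}=H\cap\mathcal Q_{r+2,e}$, with fixed generator $\Pi=\Sigma_{N+1}\cap H$), according as $e=0,1,2$ respectively.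
   Context: Notation: $\mathcal Q_{m,e}$ denotes a non-degenerate quadric of ${\rm PG}(m,q)$ which is hyperbolic $\mathcal Q^+(m,q)$ if $e=0$ ($m$ odd), parabolic $\mathcal Q(m,q)$ if $e=1$ ($m$ even), elliptic $\mathcal Q^-(m,q)$ if $e=2$ ($m$ odd). The polarity $\perp$ associated with the quadric is the one defined by the polar (bilinear) form of the quadratic form; for a point $P$ of the quadric, $P^\perp$ is its tangent hyperplane. A generator of $\mathcal Q_{m,e}$ is a projective subspace of maximal dimension contained in it; generators are $\frac{m-e-1}{2}$-dimensional. A spread of $\mathcal Q_{m,e}$ is a set of $q^{\frac{m+e-1}{2}}+1$ pairwise disjoint generators. An $s$-space means an $s$-dimensional projective subspace. Affine vector space partition (avsp): given a hyperplane $H$ of ${\rm PG}(r+1,q)$, an avsp (with respect to $H$) is a set $\mathcal P$ of subspaces, none contained in $H$, such that every point of ${\rm PG}(r+1,q)\setminus H$ lies in exactly one member of $\mathcal P$. Hyperbolic/parabolic/elliptic avsp: with $e=0,1,2$ respectively, an avsp $\mathcal P=\{S_1,\dots,S_N\}$ of ${\rm PG}(r+1,q)$ with respect to $H$, where $N=q^{\frac{r+e+1}{2}}$ and every $S_i$ is a $\frac{r-e+1}{2}$-space, such that the sets $\Pi_i=S_i\cap H$ are $N$ generators of a non-degenerate quadric $\mathcal Q_{r,e}\subset H$ with: (1) each $\Pi_i$ disjoint from a fixed generator $\Pi$ of $\mathcal Q_{r,e}$; (2) distinct $S_i,S_j$ meet in at most one point, and distinct $\Pi_i,\Pi_j$ meet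 in at most one point; (3) if $|\Pi_i\cap\Pi_j|=1$, then $\langle S_i,S_j\rangle\cap\mathcal Q_{r,e}$ is a non-degenerate hyperbolic quadric $\mathcal Q^+(r-e,q)$. *)

(* Defs.v *)
From HB Require Import structures.
From mathcomp Require Import all_boot all_order all_algebra all_field.
Set Implicit Arguments. Unset Strict Implicit. Unset Printing Implicit Defensive.
Import GRing.Theory.
Local Open Scope ring_scope.

(* PG(n-1,q) = lattice of subspaces of V = 'rV[F]_n, F finite field with q = #|F|.
   A projective s-space is a vector subspace of dimension s+1; a point is a
   1-dimensional subspace. Quadrics are given by a matrix A: Q(x) = x A x^T
   (every quadratic form has this shape, also in characteristic 2). *)

Section QuadricDefs.
Variables (F : finFieldType) (n : nat).
Implicit Types (A : 'M[F]_n) (x y : 'rV[F]_n) (W T G U H X : {vspace 'rV[F]_n}).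

Definition qf A x : F := (x *m A *m x^T) 0 0.
Definition polar A x y : F := qf A (x + y) - qf A x - qf A y.

Definition perp A X : {vspace 'rV[F]_n} :=
  <<[seq y <- enum 'rV[F]_n | [forall x : 'rV[F]_n, (x \in X) ==> (polar A x y == 0%R)]]>>%VS.

Definition tsing A T := forall x, x \in T -> qf A x = 0.

Definition nondeg_on A W :=
  forall x, x \in W -> x != 0 -> (forall y, y \in W -> polar A x y = 0) -> qf A x != 0.

Definition generator A W G :=
  [/\ (G <= W)%VS, tsing A G &
      forall T, (T <= W)%VS -> tsing A T -> (\dim T <= \dim G)%N].

(* W is an m-space and W cap Q is a non-degenerate quadric Q_{m,e} of W:
   generators are (m-e-1)/2-dimensional (projective). *)
Definition quadric_type A W (m e : nat) :=
  [/\ \dim W = m.+1, nondeg_on A W &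
      exists G, generator A W G /\ (2 * \dim G + e = m.+1)%N].

Definition avsp (k : nat) U H (S : 'I_k -> {vspace 'rV[F]_n}) :=
  [/\ (H <= U)%VS, (\dim H).+1 = \dim U,
      forall i, (S i <= U)%VS /\ ~~ (S i <= H)%VS &
      forall x, x \in U -> x \notin H -> exists! i, x \in S i].

Definition quadric_avsp (r e : nat) A U H Pi
    (S : 'I_(#|F| ^ ((r + e + 1)./2)) -> {vspace 'rV[F]_n}) :=
  [/\ \dim U = r.+2, avsp U H S,
      (forall i, \dim (S i) = ((r + 3 - e)./2)%N),
      quadric_type A H r e & generator A H Pi] /\
  [/\ (forall i, generator A H (S i :&: H)%VS),
      (forall i, (S i :&: H :&: Pi)%VS = 0%VS),
      (forall i j, i != j ->
         (\dim (S i :&: S j) <= 1)%N /\ (\dim ((S i :&: H) :&: (S j :&: H)) <= 1)%N) &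
      (forall i j, i != j -> \dim ((S i :&: H) :&: (S j :&: H)) = 1%N ->
         quadric_type A ((S i + S j) :&: H)%VS (r - e) 0)].

End QuadricDefs.
Arguments quadric_avsp {F n} r e A U H Pi S.

(* Main.v *)
Require Import Defs.
From HB Require Import structures.
From mathcomp Require Import all_boot all_order all_algebra all_field.
From mathcomp Require Import ring zify.
Import GRing.Theory.
Local Open Scope ring_scope.

Module Aux.
Set Implicit Arguments. Unset Strict Implicit.

Section S.
Variables (F : finFieldType) (n : nat) (A : 'M[F]_n).
Implicit Types (x y z : 'rV[F]_n) (k : F).
Lemma add00 (M N : 'M[F]_1) : (M + N) 0 0 = M 0 0 + N 0 0.
Proof. by rewrite mxE. Qed.
Lemma scale00 k (M : 'M[F]_1) : (k *: M) 0 0 = k * M 0 0.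
Proof. by rewrite mxE. Qed.
Lemma polarE x y : polar A x y = (x *m (A + A^T) *m y^T) 0 0.
Proof.
have E : (y *m A *m x^T) 0 0 = (x *m A^T *m y^T) 0 0.
  transitivity ((y *m A *m x^T)^T 0 0); first by rewrite [RHS]mxE.
  by rewrite !trmx_mul trmxK mulmxA.
rewrite /polar /qf !mulmxDl !mulmxDr linearD /= !mulmxDr !add00 E mulmxDl add00.
ring.
Qed.
Lemma polarC x y : polar A x y = polar A y x.
Proof. rewrite /polar [y + x]addrC; ring. Qed.
Lemma polarDl x y z : polar A (x + y) z = polar A x z + polar A y z.
Proof. by rewrite !polarE !mulmxDl add00. Qed.
Lemma polarZl k x z : polar A (k *: x) z = k * polar A x z.
Proof. by rewrite !polarE -!scalemxAl scale00. Qed.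
Lemma polarDr x y z : polar A z (x + y) = polar A z x + polar A z y.
Proof. by rewrite ![polar A z _]polarC polarDl. Qed.
Lemma polarZr k x z : polar A z (k *: x) = k * polar A z x.
Proof. by rewrite ![polar A z _]polarC polarZl. Qed.
Lemma polarNl x z : polar A (- x) z = - polar A x z.
Proof. by rewrite -scaleN1r polarZl mulN1r. Qed.
Lemma polarNr x z : polar A z (- x) = - polar A z x.
Proof. by rewrite -scaleN1r polarZr mulN1r. Qed.
Lemma polarBl x y z : polar A (x - y) z = polar A x z - polar A y z.
Proof. by rewrite polarDl polarNl. Qed.
Lemma polarBr x y z : polar A z (x - y) = polar A z x - polar A z y.
Proof. by rewrite polarDr polarNr. Qed.
Lemma polar0l z : polar A 0 z = 0.
Proof. by rewrite -(scale0r 0) polarZl mul0r. Qed.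
Lemma polar0r z : polar A z 0 = 0.
Proof. by rewrite polarC polar0l. Qed.
Lemma qfD x y : qf A (x + y) = qf A x + qf A y + polar A x y.
Proof. rewrite /polar; ring. Qed.
Lemma qfZ k x : qf A (k *: x) = k ^+ 2 * qf A x.
Proof. by rewrite /qf -!scalemxAl linearZ /= -scalemxAr !scale00 mulrA expr2. Qed.
Lemma qf0 : qf A 0 = 0.
Proof. by rewrite -(scale0r 0) qfZ expr0n mul0r. Qed.
Lemma polar_iso x : qf A x = 0 -> polar A x x = 0.
Proof.
move=> h; rewrite /polar; have -> : x + x = (1 + 1) *: x by rewrite scalerDl scale1r.
by rewrite /polar qfZ h mulr0 !subr0.
Qed.
Lemma tsing_polar T x y : tsing A T -> x \in T -> y \in T -> polar A x y = 0.
Proof. by move=> hT hx hy; rewrite /polar !hT ?memvD // !subr0. Qed.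
End S.

Section S.
Variables (F : finFieldType) (n : nat) (A : 'M[F]_n).
Implicit Types (x y z : 'rV[F]_n) (k : F).
Lemma perpP (X : {vspace 'rV[F]_n}) y :
  reflect (forall x, x \in X -> polar A x y = 0) (y \in perp A X).
Proof.
apply: (iffP idP) => [|h]; last first.
  apply: memv_span; rewrite mem_filter mem_enum andbT.
  by apply/forallP => x; apply/implyP => hx; apply/eqP; apply: h.
rewrite /perp.
have : {in filter (fun y => [forall x, (x \in X) ==> (polar A x y == 0)]) (enum 'rV[F]_n),
  forall a x, x \in X -> polar A x a = 0}.
  by move=> a; rewrite mem_filter => /andP [/forallP h _] x hx; apply/eqP; exact: (implyP (h x)).
elim: (filter _ _) y => [|a s IH] y hs.
  by rewrite span_nil memv0 => /eqP -> x _; rewrite polar0r.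
rewrite span_cons => /memv_addP [u /vlineP [k ->] [v hv ->]] x hx.
rewrite polarDr polarZr (IH v) //; last by move=> b hb; apply: hs; rewrite inE hb orbT.
by rewrite (hs a) ?inE ?eqxx // mulr0 addr0.
Qed.
Lemma perp_line p y : (y \in perp A <[p]>) = (polar A p y == 0).
Proof.
apply/perpP/eqP => [h | h x /vlineP [k ->]]; first by apply: h; exact: memv_line.
by rewrite polarZl h mulr0.
Qed.
End S.

Section Main.
Variables (F : finFieldType) (r e : nat) (A : 'M[F]_(r.+3)).
Variables (p : 'rV[F]_(r.+3)) (U S0 : {vspace 'rV[F]_(r.+3)}).
Hypotheses (hQ : quadric_type A fullv r.+2 e) (hS0 : generator A fullv S0)
  (hp : p != 0) (hpS0 : p \in S0) (hdU : \dim U = r.+2) (hpU : p \notin U).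
Local Notation V := 'rV[F]_(r.+3).
Local Notation P := (perp A <[p]>).
Local Notation H := (U :&: perp A <[p]>)%VS.
Local Notation d := (\dim S0).
Implicit Types (x y z u v : V) (T W Y : {vspace V}).

Lemma dimf : \dim (fullv : {vspace V}) = r.+3.
Proof. by rewrite dimvf /dim /= mul1n. Qed.

Lemma L_nd : nondeg_on A fullv.
Proof. by case: hQ. Qed.

Lemma L_genbound T : tsing A T -> (\dim T <= d)%N.
Proof. by case: hS0 => _ _; apply; rewrite subvf. Qed.

Lemma L_gendim T : generator A fullv T -> \dim T = d.
Proof.
case=> _ hT hTm; apply/eqP; rewrite eqn_leq L_genbound // hTm ?subvf //.
by case: hS0.
Qed.

Lemma L_2d : (2 * d + e = r.+3)%N.
Proof. by case: hQ => _ _ [G [hG hG2]]; rewrite -(L_gendim hG). Qed.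

Lemma qfp : qf A p = 0.
Proof. by case: hS0 => _ h _; apply: h. Qed.

Lemma bpp : polar A p p = 0.
Proof. exact: polar_iso qfp. Qed.

Lemma L_y0 : exists y0, polar A p y0 != 0.
Proof.
case: (pickP (fun y => polar A p y != 0)) => [y0 hy0 | hn]; first by exists y0.
have := L_nd (memvf p) hp; rewrite qfp eqxx => h; suff: false by []; apply: h.
by move=> y _; apply/eqP/negbFE; exact: hn.
Qed.

Lemma L_Up c : c *: p \in U -> c = 0.
Proof.
move=> h; apply/eqP; apply/negPn/negP => hc; move/negP: hpU; apply.
by rewrite -[p](scalerK hc) memvZ.
Qed.

Lemma L_Upx x c : x \in U -> x = c *: p -> x = 0.
Proof. by move=> hx hxe; move: hx; rewrite hxe => /L_Up ->; rewrite scale0r. Qed.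

Lemma L_lineU T : (T <= U)%VS -> (T :&: <[p]> = 0)%VS.
Proof.
move=> hT; apply/eqP; rewrite -subv0; apply/subvP => x /memv_capP [hx /vlineP [k hk]].
by rewrite memv0; apply/eqP; apply: (L_Upx (subvP hT _ hx) hk).
Qed.

Lemma dim_add_line T : (T <= U)%VS -> \dim (T + <[p]>) = (\dim T).+1.
Proof.
move=> hT; have := dimv_sum_cap T <[p]>.
by rewrite L_lineU // dimv0 addn0 dim_vline hp addn1.
Qed.

Lemma L_Ufull : (U + <[p]> = fullv)%VS.
Proof.
by apply/eqP; rewrite eqEdim subvf dimf dim_add_line ?subvv // hdU leqnn.
Qed.

Lemma L_dec v : exists c u, u \in U /\ v = c *: p + u.
Proof.
have : v \in (U + <[p]>)%VS by rewrite L_Ufull memvf.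
case/memv_addP => u hu [w /vlineP [c ->] ->]; exists c, u; split => //.
by rewrite addrC.
Qed.


Lemma L_Pmem y : (y \in P) = (polar A p y == 0).
Proof. exact: perp_line. Qed.

Lemma L_pP : p \in P.
Proof. by rewrite L_Pmem bpp. Qed.

Lemma L_Hmem y : (y \in H) = (y \in U) && (polar A p y == 0).
Proof. by rewrite memv_cap L_Pmem. Qed.

Lemma L_Pdim : \dim P = r.+2.
Proof.
have [y0 hy0] := L_y0.
have hcap : (P :&: <[y0]> = 0)%VS.
  apply/eqP; rewrite -subv0; apply/subvP => x /memv_capP [hx /vlineP [k hk]].
  move: hx; rewrite L_Pmem hk polarZr mulf_eq0 (negbTE hy0) orbF => /eqP ->.
  by rewrite scale0r mem0v.
have hfull : (P + <[y0]> = fullv)%VS.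
  apply/eqP; rewrite eqEdim subvf /=; apply: dimvS; apply/subvP => v _.
  set mu := polar A p v / polar A p y0.
  rewrite -[v](subrK (mu *: y0)); apply: memv_add; last by rewrite memvZ ?memv_line.
  rewrite L_Pmem polarBr polarZr.
  by rewrite /mu divfK // subrr.
have := dimv_sum_cap P <[y0]>.
rewrite hcap hfull dimf dimv0 addn0 dim_vline.
have -> : (y0 != 0) = true.
  by apply/negP => /eqP h; move: hy0; rewrite h polar0r eqxx.
by rewrite addn1 => -[].
Qed.

Lemma L_Hdim : \dim H = r.+1.
Proof.
have hfull : (U + P = fullv)%VS.
  apply/eqP; rewrite eqEdim subvf /= -L_Ufull; apply: dimvS.
  by rewrite addvS // -memvE L_pP.
have := dimv_sum_cap U P; rewrite hfull dimf hdU L_Pdim.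
move=> h; apply/eqP; rewrite -(eqn_add2l r.+3) h.
by rewrite !addSn !addnS.
Qed.

Lemma L_HU : (H <= U)%VS.
Proof. exact: capvSl. Qed.

Lemma L_S0P s : s \in S0 -> polar A p s = 0.
Proof. by case: hS0 => _ ht _ hs; apply: (tsing_polar ht). Qed.

Lemma L_d1 : (0 < d)%N.
Proof.
rewrite lt0n dimv_eq0; apply/negP => /eqP h; move: hpS0; rewrite h memv0.
by rewrite (negbTE hp).
Qed.

Lemma L_Pidim : \dim (S0 :&: H) = d.-1.
Proof.
have -> : (S0 :&: H = S0 :&: U)%VS.
  rewrite capvA; apply/capv_idPl; apply/subvP => x /memv_capP [hx _].
  by rewrite L_Pmem L_S0P.
have hfull : (S0 + U = fullv)%VS.
  apply/eqP; rewrite eqEdim subvf /= -L_Ufull addvC; apply: dimvS.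
  by rewrite addvS // -memvE.
have := dimv_sum_cap S0 U; rewrite hfull dimf hdU.
have := L_d1; case: (\dim S0) => // k _ /=; rewrite !addSn !addnS => -[].
by rewrite addnC => /addIn.
Qed.

Lemma L_tsing_addp T : tsing A T -> (forall t, t \in T -> polar A p t = 0) ->
  tsing A (T + <[p]>)%VS.
Proof.
move=> hT hTp x /memv_addP [t ht [w /vlineP [k ->] ->]].
by rewrite qfD qfZ qfp hT // polarZr polarC hTp // !mulr0 !addr0.
Qed.

Lemma L_Hbound T : tsing A T -> (T <= H)%VS -> (\dim T <= d.-1)%N.
Proof.
move=> hT hTH.
have hTU : (T <= U)%VS := subv_trans hTH L_HU.
have hTp : forall t, t \in T -> polar A p t = 0.
  by move=> t /(subvP hTH); rewrite L_Hmem => /andP [_ /eqP].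
have := L_genbound (L_tsing_addp hT hTp).
rewrite dim_add_line // => h.
by rewrite -ltnS prednK // L_d1.
Qed.

Lemma L_genPi : generator A H (S0 :&: H).
Proof.
split; first exact: capvSr.
  by move=> x /memv_capP [hx _]; case: hS0 => _ ht _; apply: ht.
by move=> T hTH hT; rewrite L_Pidim; apply: L_Hbound.
Qed.

Lemma L_key Y W x y0 : p \in Y -> y0 \in Y -> polar A p y0 != 0 ->
  (forall y, y \in Y -> polar A p y = 0 -> exists c u, u \in W /\ y = c *: p + u) ->
  polar A p x = 0 -> (forall u, u \in W -> polar A x u = 0) ->
  forall y, y \in Y -> polar A (x - (polar A x y0 / polar A p y0) *: p) y = 0.
Proof.
move=> hpY hy0Y hy0 hdec hxp hxW y hy.
set mu := polar A p y / polar A p y0.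
have hy' : y - mu *: y0 \in Y by rewrite memvB // memvZ.
have hpy' : polar A p (y - mu *: y0) = 0 by rewrite polarBr polarZr /mu divfK // subrr.
have [c [u [hu hyu]]] := hdec _ hy' hpy'.
have hxy' : polar A x (y - mu *: y0) = 0.
  by rewrite hyu polarDr polarZr polarC hxp mulr0 add0r hxW.
move: hxy' hpy'; rewrite !polarBr !polarZr => /subr0_eq hxy /subr0_eq hpy.
rewrite polarBl polarZl hxy hpy /mu.
field.
exact: hy0.
Qed.

Lemma L_Hnd : nondeg_on A H.
Proof.
move=> x hx hx0 hxH; apply/negP => /eqP hqx.
have [y0 hy0] := L_y0.
move: (hx); rewrite L_Hmem => /andP [hxU /eqP hxp].
set z := x - (polar A x y0 / polar A p y0) *: p.
have hz : forall y, y \in fullv -> polar A z y = 0.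
  apply: (L_key (W := H)) => //; try exact: memvf.
  move=> y _ hpy; have [c [u [hu hyu]]] := L_dec y; exists c, u; split => //.
  rewrite L_Hmem hu /=; move: hpy; rewrite hyu polarDr polarZr bpp mulr0 add0r.
  by move=> ->.
have hqz : qf A z = 0.
  by rewrite /z qfD hqx add0r -scaleNr qfZ qfp mulr0 add0r polarZr [polar A x p]polarC hxp mulr0.
have hz0 : z != 0.
  apply/negP => /eqP h; move/negP: hx0; apply; apply/eqP.
  apply: (L_Upx hxU); exact: (subr0_eq h).
by have := L_nd (memvf z) hz0 hz; rewrite hqz eqxx.
Qed.

Lemma L_Htype : quadric_type A H r e.
Proof.
split; first exact: L_Hdim.
  exact: L_Hnd.
exists (S0 :&: H)%VS; split; first exact: L_genPi.
rewrite L_Pidim; have := L_2d; have := L_d1.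
case: (\dim S0) => // k _; rewrite /= !mulnS; lia.
Qed.

Section Sig.
Variable Sg : {vspace V}.
Hypotheses (hSg : generator A fullv Sg) (hSg0 : (Sg :&: S0 = 0)%VS).
Local Notation S := ((<[p]> + Sg) :&: U)%VS.

Lemma L_pSg : p \notin Sg.
Proof.
apply/negP => h; have : p \in (Sg :&: S0)%VS by rewrite memv_cap h hpS0.
by rewrite hSg0 memv0 (negbTE hp).
Qed.

Lemma L_Sgtsing : tsing A Sg.
Proof. by case: hSg. Qed.

Lemma L_Smem x : x \in S -> x \in U /\ exists a s, s \in Sg /\ x = a *: p + s.
Proof.
case/memv_capP => /memv_addP [w /vlineP [a ->] [s hs ->]] hU.
by split => //; exists a, s.
Qed.

Lemma L_Sdim : \dim S = d.
Proof.
have hcap : (<[p]> :&: Sg = 0)%VS.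
  apply/eqP; rewrite -subv0; apply/subvP => x /memv_capP [/vlineP [k ->] hk].
  rewrite memv0; apply/eqP; apply/eqP/negPn/negP => hk0; move/negP: L_pSg; apply.
  have : k != 0 by apply/negP => /eqP h; move: hk0; rewrite h scale0r eqxx.
  by move=> hk1; rewrite -[p](scalerK hk1) memvZ.
have h1 : \dim (<[p]> + Sg) = d.+1.
  have := dimv_sum_cap <[p]> Sg; rewrite hcap dimv0 addn0 dim_vline hp.
  by rewrite (L_gendim hSg) add1n.
have hfull : (<[p]> + Sg + U = fullv)%VS.
  apply/eqP; rewrite eqEdim subvf /= -L_Ufull; apply: dimvS.
  by rewrite addvC subv_add addvSr andbT -addvA addvSl.
have := dimv_sum_cap (<[p]> + Sg) U; rewrite hfull h1 dimf hdU.
lia.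
Qed.

Lemma L_SHtsing : tsing A (S :&: H).
Proof.
move=> x /memv_capP [/L_Smem [_ [a [s [hs ->]]]]].
rewrite L_Hmem => /andP [_].
rewrite polarDr polarZr bpp mulr0 add0r => /eqP hps.
by rewrite qfD qfZ qfp mulr0 add0r L_Sgtsing // polarZl hps mulr0 addr0.
Qed.

Lemma L_SHdim : \dim (S :&: H) = d.-1.
Proof.
apply/eqP; rewrite eqn_leq L_Hbound ?L_SHtsing ?capvSr //=.
have := dimv_sum_cap S H; rewrite L_Sdim L_Hdim.
have : (\dim (S + H) <= r.+2)%N.
  by rewrite -[X in (_ <= X)%N]hdU; apply: dimvS; rewrite subv_add capvSr L_HU.
lia. exact: L_SHtsing.
Qed.

Lemma L_genS : generator A H (S :&: H).
Proof.
split; [exact: capvSr | exact: L_SHtsing |].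
by move=> T hTH hT; rewrite L_SHdim; apply: L_Hbound.
Qed.

Lemma L_SPi : (S :&: H :&: (S0 :&: H) = 0)%VS.
Proof.
apply/eqP; rewrite -subv0; apply/subvP => x.
case/memv_capP => /memv_capP [/L_Smem [hxU [a [s [hs hx]]]] _] /memv_capP [hx0 _].
have hsS0 : s \in S0.
  have -> : s = x - a *: p by rewrite hx addrC addKr.
  by rewrite memvB // memvZ.
have : s \in (Sg :&: S0)%VS by rewrite memv_cap hs hsS0.
rewrite hSg0 memv0 => /eqP hs0; rewrite hs0 addr0 in hx.
by rewrite memv0 (L_Upx hxU hx).
Qed.

Lemma L_SnotH : ~~ (S <= H)%VS.
Proof.
apply/negP => h; have := L_SHdim; move/capv_idPl: h => ->.
rewrite L_Sdim; have := L_d1; case: (\dim S0) => // k _ /= /eqP.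
by rewrite -[k.+1]addn1 -{2}[k]addn0 eqn_add2l.
Qed.

Lemma L_SU : (S <= U)%VS.
Proof. exact: capvSr. Qed.

End Sig.

Lemma L_Smem2 (Sg : {vspace V}) x : x \in ((<[p]> + Sg) :&: U)%VS -> exists a, x - a *: p \in Sg.
Proof.
case/memv_capP => /memv_addP [w /vlineP [a ->] [s hs ->]] _.
by exists a; rewrite addrC addKr.
Qed.

Lemma L_Smem3 (Sg : {vspace V}) x a : x \in U -> x - a *: p \in Sg -> x \in ((<[p]> + Sg) :&: U)%VS.
Proof.
move=> hx hs; rewrite memv_cap hx andbT -[x](subrK (a *: p)) addrC.
by apply: memv_add => //; rewrite memvZ ?memv_line.
Qed.

Section Pair.
Variables Sg1 Sg2 : {vspace V}.
Hypotheses (hSg1 : generator A fullv Sg1) (hSg10 : (Sg1 :&: S0 = 0)%VS).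
Hypotheses (hSg2 : generator A fullv Sg2) (hSg20 : (Sg2 :&: S0 = 0)%VS).
Hypothesis (h12 : (Sg1 :&: Sg2 = 0)%VS).
Local Notation S1 := ((<[p]> + Sg1) :&: U)%VS.
Local Notation S2 := ((<[p]> + Sg2) :&: U)%VS.

Lemma L_in12 w : w \in Sg1 -> w \in Sg2 -> w = 0.
Proof.
move=> h1 h2; have : w \in (Sg1 :&: Sg2)%VS by rewrite memv_cap h1 h2.
by rewrite h12 memv0 => /eqP.
Qed.

Lemma L_interH x : x \in S1 -> x \in S2 -> x \in H.
Proof.
move=> hx1 hx2; have hxU : x \in U by case/memv_capP: hx1.
have [a ha] := L_Smem2 hx1; have [b hb] := L_Smem2 hx2.
rewrite L_Hmem hxU /=.
have -> : x = (x - a *: p) + a *: p by rewrite subrK.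
rewrite polarDr polarZr bpp mulr0 addr0.
case: (eqVneq a b) => [hab | hab].
  by rewrite (@L_in12 (x - a *: p)) ?polar0r // hab.
have e1 : x - b *: p = (x - a *: p) + (a - b) *: p.
  by apply/rowP => i; rewrite !mxE; ring.
have := L_Sgtsing hSg2 hb; rewrite e1 qfD qfZ qfp mulr0 addr0.
rewrite (L_Sgtsing hSg1 ha) add0r polarZr polarC => /eqP.
by rewrite mulf_eq0 subr_eq0 (negbTE hab).
Qed.

Lemma L_interline x0 x : x0 \in (S1 :&: S2)%VS -> x0 != 0 -> x \in (S1 :&: S2)%VS ->
  x \in <[x0]>%VS.
Proof.
case/memv_capP => h01 h02 hx0 /memv_capP [h1 h2].
have hx0U : x0 \in U by case/memv_capP: h01.
have hxU : x \in U by case/memv_capP: h1.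
have [a0 ha0] := L_Smem2 h01; have [b0 hb0] := L_Smem2 h02.
have [a ha] := L_Smem2 h1; have [b hb] := L_Smem2 h2.
have hab0 : a0 - b0 != 0.
  rewrite subr_eq0; apply/negP => /eqP hab.
  move: hb0; rewrite -hab => hb0.
  have := L_in12 ha0 hb0 => /subr0_eq hx.
  by move/negP: hx0; apply; rewrite (L_Upx hx0U hx).
set l := (a - b) / (a0 - b0).
have e1 : (x - a *: p) - l *: (x0 - a0 *: p) = (x - l *: x0) - (a - l * a0) *: p.
  by apply/rowP => i; rewrite !mxE; ring.
have e2 : (x - b *: p) - l *: (x0 - b0 *: p) = (x - l *: x0) - (a - l * a0) *: p.
  have -> : a - l * a0 = b - l * b0 by rewrite /l; field.
  by apply/rowP => i; rewrite !mxE; ring.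
have h1' : (x - l *: x0) - (a - l * a0) *: p \in Sg1 by rewrite -e1 memvB // memvZ.
have h2' : (x - l *: x0) - (a - l * a0) *: p \in Sg2 by rewrite -e2 memvB // memvZ.
have := L_in12 h1' h2' => /subr0_eq hw.
have hwU : x - l *: x0 \in U by rewrite memvB // memvZ.
have := L_Upx hwU hw => /subr0_eq ->.
by rewrite memvZ ?memv_line.
Qed.

Lemma L_interdim : (\dim (S1 :&: S2) <= 1)%N.
Proof.
case: (eqVneq (S1 :&: S2)%VS 0%VS) => [-> | hne]; first by rewrite dimv0.
set x0 := vpick (S1 :&: S2)%VS.
have hx0 : x0 != 0 by rewrite /x0 vpick0.
have : (S1 :&: S2 <= <[x0]>)%VS.
  by apply/subvP => x hx; apply: L_interline => //; exact: memv_pick.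
by move/dimvS; rewrite dim_vline hx0.
Qed.

Lemma L_interdimH : (\dim ((S1 :&: H) :&: (S2 :&: H)) <= 1)%N.
Proof.
apply: leq_trans L_interdim; apply: dimvS.
by apply/subvP => x /memv_capP [/memv_capP [h1 _] /memv_capP [h2 _]]; rewrite memv_cap h1 h2.
Qed.

Lemma L_max (Sg : {vspace V}) t : generator A fullv Sg -> qf A t = 0 ->
  (forall s, s \in Sg -> polar A t s = 0) -> t \in Sg.
Proof.
move=> hSg ht hts.
have hT : tsing A (Sg + <[t]>)%VS.
  move=> x /memv_addP [s hs [w /vlineP [k ->] ->]].
  by rewrite qfD qfZ ht (L_Sgtsing hSg) // polarZr polarC hts // !mulr0 !addr0.
have : (Sg == Sg + <[t]>)%VS.
  rewrite eqEdim addvSl /= (L_gendim hSg); exact: L_genbound.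
move/eqP => ->; apply/memv_addP; exists 0; first exact: mem0v.
by exists t; [exact: memv_line | rewrite add0r].
Qed.

Local Notation Y := (Sg1 + Sg2)%VS.
Local Notation W := ((S1 + S2) :&: H)%VS.

Lemma L_Ynd z : z \in Y -> (forall y, y \in Y -> polar A z y = 0) -> z = 0.
Proof.
case/memv_addP => s hs [t ht ->] hz.
have ht1 : t \in Sg1.
  apply: L_max hSg1 (L_Sgtsing hSg2 ht) _ => s' hs'.
  have -> : t = (s + t) - s by rewrite [s + t]addrC addrK.
  rewrite polarBl hz ?(tsing_polar (L_Sgtsing hSg1) hs hs') ?subr0 //.
  by rewrite -[s']addr0 memv_add ?mem0v.
have hs2 : s \in Sg2.
  apply: L_max hSg2 (L_Sgtsing hSg1 hs) _ => s' hs'.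
  have -> : s = (s + t) - t by rewrite addrK.
  rewrite polarBl hz ?(tsing_polar (L_Sgtsing hSg2) ht hs') ?subr0 //.
  by rewrite -[s']add0r memv_add ?mem0v.
by rewrite (L_in12 ht1 ht) (L_in12 hs hs2) addr0.
Qed.

Lemma L_ab x0 a0 b0 : x0 \in U -> x0 != 0 -> x0 - a0 *: p \in Sg1 -> x0 - b0 *: p \in Sg2 ->
  a0 - b0 != 0.
Proof.
move=> hx0U hx0 ha0 hb0; rewrite subr_eq0; apply/negP => /eqP hab.
move: hb0; rewrite -hab => hb0.
have := L_in12 ha0 hb0 => /subr0_eq hx.
by move/negP: hx0; apply; rewrite (L_Upx hx0U hx).
Qed.

Lemma L_S1Y x : p \in Y -> x \in S1 -> x \in Y.
Proof.
move=> hpY hx; have [a ha] := L_Smem2 hx.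
have -> : x = (x - a *: p) + a *: p by rewrite subrK.
by rewrite memvD ?memvZ // -[_ - _]addr0 memv_add ?mem0v.
Qed.

Lemma L_S2Y x : p \in Y -> x \in S2 -> x \in Y.
Proof.
move=> hpY hx; have [a ha] := L_Smem2 hx.
have -> : x = (x - a *: p) + a *: p by rewrite subrK.
by rewrite memvD ?memvZ // -[_ - _]add0r memv_add ?mem0v.
Qed.

Section W1.
Hypothesis hW1 : \dim ((S1 :&: H) :&: (S2 :&: H)) = 1%N.

Lemma L_pY : p \in Y.
Proof.
have hne : ((S1 :&: H) :&: (S2 :&: H))%VS != 0%VS.
  by rewrite -dimv_eq0 hW1.
set x0 := vpick ((S1 :&: H) :&: (S2 :&: H))%VS.
have hx0 : x0 != 0 by rewrite /x0 vpick0.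
have : x0 \in ((S1 :&: H) :&: (S2 :&: H))%VS by exact: memv_pick.
case/memv_capP => /memv_capP [h1 _] /memv_capP [h2 _].
have hx0U : x0 \in U by case/memv_capP: h1.
have [a0 ha0] := L_Smem2 h1; have [b0 hb0] := L_Smem2 h2.
have hab := L_ab hx0U hx0 ha0 hb0.
have -> : p = (a0 - b0)^-1 *: (- (x0 - a0 *: p) + (x0 - b0 *: p)).
  by apply/rowP => i; rewrite !mxE; field.
by rewrite memvZ // memv_add // memvN.
Qed.

Lemma L_Wdec y : y \in Y -> polar A p y = 0 -> exists c u, u \in W /\ y = c *: p + u.
Proof.
case/memv_addP => s hs [t ht hy] hpy.
have [c1 [u1 [hu1 hs1]]] := L_dec s.
have [c2 [u2 [hu2 ht2]]] := L_dec t.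
have [c [u [hu hyu]]] := L_dec y.
exists c, u; split => //.
have hS1 : u1 \in S1.
  by apply: (L_Smem3 (a := - c1)) => //; rewrite scaleNr opprK addrC -hs1.
have hS2 : u2 \in S2.
  by apply: (L_Smem3 (a := - c2)) => //; rewrite scaleNr opprK addrC -ht2.
have he : u - (u1 + u2) = (c1 + c2 - c) *: p.
  have -> : u = y - c *: p by rewrite hyu [c *: p + u]addrC addrK.
  rewrite hy hs1 ht2; apply/rowP => i; rewrite !mxE; ring.
have hUw : u - (u1 + u2) \in U by rewrite memvB // memvD.
have := L_Upx hUw he => /subr0_eq hu12.
rewrite memv_cap L_Hmem hu hu12 memv_add //=.
rewrite -hu12; move: hpy; rewrite hyu polarDr polarZr bpp mulr0 add0r => ->.
by [].
Qed.

Lemma L_Wnd : nondeg_on A W.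
Proof.
move=> x hx hx0 hxW; apply/negP => _.
have hxH : x \in H by case/memv_capP: hx.
have hxU : x \in U by case/memv_capP: hxH.
move: (hxH); rewrite L_Hmem => /andP [_ /eqP hxp].
have hpY := L_pY.
case: (pickP (fun y => (y \in Y) && (polar A p y != 0))) => [y0 /andP [hy0Y hy0] | hn]; last first.
  have : p = 0.
    apply: L_Ynd => // y hy; have := hn y => /= /negbT.
    by rewrite negb_and hy /= negbK => /eqP.
  by move/eqP; rewrite (negbTE hp).
have hxY : x \in Y.
  case/memv_capP: hx => /memv_addP [x1 hx1 [x2 hx2 ->]] _.
  by apply: memvD; [exact: L_S1Y | exact: L_S2Y].
set z := x - (polar A x y0 / polar A p y0) *: p.
have hz : forall y, y \in Y -> polar A z y = 0.
  exact: (L_key hpY hy0Y hy0 L_Wdec hxp hxW).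
have hzY : z \in Y by rewrite memvB // memvZ.
have := L_Ynd hzY hz => /subr0_eq hxl.
by move/negP: hx0; apply; rewrite (L_Upx hxU hxl).
Qed.

Lemma L_Wdim : \dim W = (d.-1 + d.-1)%N.
Proof.
have hd1 := L_SHdim hSg1 hSg10.
have hd2 := L_SHdim hSg2 hSg20.
have hs1 := L_Sdim hSg1 hSg10.
have hs2 := L_Sdim hSg2 hSg20.
have hI : \dim (S1 :&: S2) = 1%N.
  apply/eqP; rewrite eqn_leq L_interdim -[X in (X <= _)%N]hW1 dimvS //.
  apply/subvP => x /memv_capP [/memv_capP [h1 _] /memv_capP [h2 _]].
  by rewrite memv_cap h1 h2.
have hle : (1 <= d.-1)%N.
  rewrite -[X in (X <= _)%N]hW1 -hd1; apply: dimvS; exact: capvSl.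
have hsum := dimv_sum_cap S1 S2.
have hsumH := dimv_sum_cap (S1 + S2)%VS H.
have hU2 : (\dim (S1 + S2 + H) <= r.+2)%N.
  rewrite -[X in (_ <= X)%N]hdU; apply: dimvS.
  by rewrite !subv_add !capvSr L_HU.
have hneq : ~~ (\dim (S1 + S2) <= \dim W)%N.
  apply/negP => hle2.
  have : (W == (S1 + S2)%VS) by rewrite eqEdim capvSl hle2.
  move/eqP => hWe; move/negP: (L_SnotH hSg1 hSg10); apply.
  apply: (subv_trans (addvSl S1 S2)); rewrite -hWe; exact: capvSr.
rewrite L_Hdim in hsumH.
rewrite hs1 hs2 hI in hsum.
have := L_d1; lia.
Qed.

Lemma L_Wgen : generator A W (S1 :&: H).
Proof.
split.
- by apply: capvS; [exact: addvSl | exact: subvv].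
- exact: (L_SHtsing hSg1).
- move=> T hTW hT; rewrite (L_SHdim hSg1 hSg10); apply: L_Hbound => //.
  exact: (subv_trans hTW (capvSr _ _)).
Qed.

Lemma L_Wtype : quadric_type A W (r - e) 0.
Proof.
have := L_2d; have := L_d1; have := L_Wdim.
have hle : (1 <= d.-1)%N.
  rewrite -[X in (X <= _)%N]hW1 -(L_SHdim hSg1 hSg10); apply: dimvS; exact: capvSl.
move=> hW hd h2d.
split; [| exact: L_Wnd |].
  rewrite hW; lia.
exists (S1 :&: H)%VS; split; first exact: L_Wgen.
rewrite (L_SHdim hSg1 hSg10); lia.
Qed.

End W1.

End Pair.

Section Final.
Local Notation N := (#|F| ^ ((r + e + 1)./2))%N.
Variable Sigma : 'I_N.+1 -> {vspace V}.
Hypotheses (hgen : forall i, generator A fullv (Sigma i))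
  (hdisj : forall i j, i != j -> (Sigma i :&: Sigma j = 0)%VS)
  (hSig0 : S0 = Sigma ord_max) (hodd : odd (r + e)).
Local Notation Sg i := (Sigma (widen_ord (leqnSn N) i)).
Local Notation S i := ((<[p]> + Sg i) :&: U)%VS.

Lemma L_Sg0 (i : 'I_N) : (Sg i :&: S0 = 0)%VS.
Proof.
rewrite hSig0; apply: hdisj; apply/eqP => h; have := congr1 val h => /= hv.
by move: (ltn_ord i); rewrite hv ltnn.
Qed.

Lemma L_Sgij (i j : 'I_N) : i != j -> (Sg i :&: Sg j = 0)%VS.
Proof.
move=> hij; apply: hdisj; apply/eqP => h; move/negP: hij; apply; apply/eqP.
by apply: val_inj; have := congr1 val h.
Qed.

Lemma L_half : ((r + 3 - e)./2 = d)%N.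
Proof.
have := L_2d => h; have -> : (r + 3 - e = d.*2)%N by rewrite -mul2n; lia.
by rewrite doubleK.
Qed.

Lemma L_halfN : ((r + e + 1)./2 = (d + e).-1)%N.
Proof.
have := L_2d; have := L_d1 => h1 h.
have -> : (r + e + 1 = ((d + e).-1).*2)%N by rewrite -mul2n; lia.
by rewrite doubleK.
Qed.

Lemma L_cover x : x \in U -> x \notin H -> exists i : 'I_N, x \in S i.
Proof.
move=> hxU hxH.
set q := #|F|.
pose D := [set ix : 'I_N * V | (ix.2 \in S ix.1) && (ix.2 \notin H)].
pose B := [set x : V | (x \in U) && (x \notin H)].
have hA : forall i : 'I_N, #|[set x : V | (x \in S i) && (x \notin H)]| = (q ^ d - q ^ d.-1)%N.
  move=> i; have := cardsID [set x : V | x \in H] [set x : V | x \in S i].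
  have -> : #|[set x : V | x \in S i] :&: [set x : V | x \in H]| = #|(S i :&: H)%VS|.
    by apply: eq_card => y; rewrite !inE !memv_cap.
  have -> : #|[set x : V | x \in S i] :\: [set x : V | x \in H]| =
      #|[set x : V | (x \in S i) && (x \notin H)]|.
    by apply: eq_card => y; rewrite !inE andbC.
  have -> : #|[set x : V | x \in S i]| = #|S i| by apply: eq_card => y; rewrite inE.
  rewrite !card_vspace L_SHdim ?L_Sg0 //= ?L_Sdim ?L_Sg0 //.
  by move=> <-; rewrite addKn.
have hB : #|B| = (q ^ r.+2 - q ^ r.+1)%N.
  have := cardsID [set x : V | x \in H] [set x : V | x \in U].
  have -> : #|[set x : V | x \in U] :&: [set x : V | x \in H]| = #|H|.
    apply: eq_card => y; rewrite !inE; apply/andP/idP => [[] // | hy].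
    by split => //; apply: (subvP L_HU).
  have -> : #|[set x : V | x \in U] :\: [set x : V | x \in H]| = #|B|.
    by apply: eq_card => y; rewrite !inE andbC.
  have -> : #|[set x : V | x \in U]| = #|U| by apply: eq_card => y; rewrite inE.
  by rewrite !card_vspace L_Hdim hdU => <-; rewrite addKn.
have hD : #|D| = (N * (q ^ d - q ^ d.-1))%N.
  rewrite -[in RHS](card_ord N) -sum_nat_const.
  rewrite (eq_bigr (fun i => \sum_(x : V) (x \in [set x : V | (x \in S i) && (x \notin H)]) : nat)); last first.
    by move=> i _; rewrite -(hA i) -sum1_card big_mkcond /=; apply: eq_bigr => y _; case: (_ \in _).
  rewrite pair_big /= -sum1_card big_mkcond /=; apply: eq_bigr => -[i y] _.
  by rewrite !inE; case: (_ && _).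
have hinj : {in D &, injective (@snd 'I_N V)}.
  move=> [i y] [j z]; rewrite !inE /= => /andP [hy hyH] /andP [hz _] hyz.
  rewrite -hyz in hz *; congr (_, _).
  case: (eqVneq i j) => // hij; exfalso; move/negP: hyH; apply.
  exact: (L_interH (hgen _) (hgen _) (L_Sgij hij) hy hz).
have hsub : (@snd 'I_N V) @: D \subset B.
  apply/subsetP => y /imsetP [[i z]]; rewrite /D !inE /= => /andP [hz hzH] ->.
  rewrite hzH andbT; exact: (subvP (L_SU _) _ hz).
have heq : (@snd 'I_N V) @: D = B.
  apply/eqP; rewrite eqEcard hsub /= card_in_imset // hD hB.
  rewrite L_halfN mulnBr -!expnD.
  have := L_2d; have := L_d1 => h1 h2.
  have -> : ((d + e).-1 + d = r.+2)%N by lia.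
  by have -> : ((d + e).-1 + d.-1 = r.+1)%N by lia.
have : x \in B by rewrite inE hxU hxH.
rewrite -heq => /imsetP [[i z]]; rewrite inE /= => /andP [hz _] ->.
by exists i.
Qed.

Lemma L_final : quadric_avsp r e A U H (S0 :&: H)%VS (fun i => S i).
Proof.
split; split => //.
- split; [exact: L_HU | by rewrite L_Hdim hdU | |].
    by move=> i; split; [exact: L_SU | apply: L_SnotH; [exact: hgen | exact: L_Sg0]].
  move=> x hxU hxH; have [i hi] := L_cover hxU hxH; exists i; split => // j hj.
  case: (eqVneq i j) => // hij; exfalso; move/negP: hxH; apply.
  exact: (L_interH (hgen _) (hgen _) (L_Sgij hij) hi hj).
- by move=> i; rewrite L_half L_Sdim ?L_Sg0.
- exact: L_Htype.
- exact: L_genPi.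
- by move=> i; apply: L_genS; try exact: hgen; exact: L_Sg0.
- by move=> i; exact: (L_SPi (L_Sg0 i)).
- move=> i j hij; split.
    exact: (L_interdim (L_Sgij hij)).
  exact: (L_interdimH (L_Sgij hij)).
- move=> i j hij h1.
  exact: (L_Wtype (hgen _) (L_Sg0 i) (hgen _) (L_Sg0 j) (L_Sgij hij) h1).
Qed.

End Final.

End Main.

End Aux.
Import Aux.

Theorem mainTheorem2 (F : finFieldType) (r e : nat) (A : 'M[F]_(r.+3))
  (Sigma : 'I_((#|F| ^ ((r + e + 1)./2)).+1) -> {vspace 'rV[F]_(r.+3)})
  (p : 'rV[F]_(r.+3)) (U : {vspace 'rV[F]_(r.+3)}) :
  (e <= 2)%N -> odd (r + e) ->
  quadric_type A fullv r.+2 e ->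
  (forall i, generator A fullv (Sigma i)) ->
  (forall i j, i != j -> (Sigma i :&: Sigma j)%VS = 0%VS) ->
  p != 0 -> p \in Sigma ord_max ->
  \dim U = r.+2 -> p \notin U ->
  let H := (U :&: perp A <[p]>)%VS in
  quadric_avsp r e A U H (Sigma ord_max :&: H)%VS
    (fun i => ((<[p]> + Sigma (widen_ord (leqnSn _) i)) :&: U)%VS).
Proof.
move=> he2 hodd hQ hgen hdisj hp hpS hdU hpU H.
exact: (L_final hQ (hgen ord_max) hp hpS hdU hpU hgen hdisj erefl hodd).
Qed.
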